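(* Let $\mathcal{S}=\{s_1,\dots,s_N\}$ be a finite state space, $\mathcal{A}$ a finite action space and $\gamma\in(0,1)$. Consider the real MDP $\langle\mathcal{S},\mathcal{A},\mathbb{P},R,\gamma\rangle$ and the DT MDP $\langle\mathcal{S},\mathcal{A},\mathbb{P}',R',\gamma\rangle$. Then for every deterministic policy $\pi:\mathcal{S}\to\mathcal{A}$, $$\|V_{\mathrm{real}}^*-V_{\mathrm{real}}^{\pi}\|\le \frac{2}{1-\gamma}\max_i \bar d(s_i,s_i)+\frac{1+\gamma}{1-\gamma}\|V_{\mathrm{DT}}^*-V_{\mathrm{DT}}^{\pi}\|\le \frac{2}{(1-\gamma)^2}\max_i d_{\mathrm{TV}}(s_i,s_i)+\frac{1+\gamma}{1-\gamma}\|V_{\mathrm{DT}}^*-V_{\mathrm{DT}}^{\pi}\|.$$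
   Context: $\mathbb{P}(\cdot|s,a)$ and $\mathbb{P}'(\cdot|s,a)$ are probability distributions on $\mathcal{S}$ for each $(s,a)$; $R,R':\mathcal{S}\times\mathcal{A}\to\mathbb{R}$ are reward functions. For a deterministic policy $\pi$, $V^\pi_{\mathrm{real}}$ is the unique solution of $V(s)=R(s,\pi(s))+\gamma\sum_{\tilde s}\mathbb{P}(\tilde s|s,\pi(s))V(\tilde s)$ for all $s$, and $V^*_{\mathrm{real}}$ the unique solution of $V(s)=\max_a\{R(s,a)+\gamma\sum_{\tilde s}\mathbb{P}(\tilde s|s,a)V(\tilde s)\}$; $V^\pi_{\mathrm{DT}},V^*_{\mathrm{DT}}$ are defined in the same way with $\mathbb{P}',R'$. Define $\|V^*_{\mathrm{real}}-V^\pi_{\mathrm{real}}\|=\max_i\{V^*_{\mathrm{real}}(s_i)-V^\pi_{\mathrm{real}}(s_i)\}$ and similarly $\|V^*_{\mathrm{DT}}-V^\pi_{\mathrm{DT}}\|$. Let $R_{\max}=\max_{i,j,a}|R(s_i,a)-R'(s_j,a)|$. For probability distributions $P,Q$ on $\mathcal{S}$ and a cost $d:\mathcal{S}\times\mathcal{S}\to[0,\infty)$ (not required to vanish on the diagonal; the first argument is regarded as a state of the real MDP and the second as a state of the DT MDP), $W_1(P,Q;d)=\min_{\Lambda}\sum_{i,j}\lambda_{i,j}d(s_i,s_j)$, the minimum over nonnegative $N\times N$ matrices $\Lambda=(\lambda_{i,j})$ with $\sum_j\lambda_{i,j}=P(s_i)$ and $\sum_i\lambda_{i,j}=Q(s_j)$.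 Define $d_0\equiv0$ and $d_n(s_i,s_j)=\max_a\{|R(s_i,a)-R'(s_j,a)|+\gamma W_1(\mathbb{P}(\cdot|s_i,a),\mathbb{P}'(\cdot|s_j,a);d_{n-1})\}$; the DT bisimulation metric $\bar d$ is the pointwise limit (equivalently supremum) of the nondecreasing sequence $d_n$, and it satisfies $\bar d(s_i,s_j)=\max_a\{|R(s_i,a)-R'(s_j,a)|+\gamma W_1(\mathbb{P}(\cdot|s_i,a),\mathbb{P}'(\cdot|s_j,a);\bar d)\}$. With $\mathrm{TV}(P,Q)=\frac12\sum_i|P(s_i)-Q(s_i)|$, define $d_{\mathrm{TV}}(s_i,s_i)=\max_a\{|R(s_i,a)-R'(s_i,a)|+\frac{\gamma R_{\max}}{1-\gamma}\mathrm{TV}(\mathbb{P}(\cdot|s_i,a),\mathbb{P}'(\cdot|s_i,a))\}$. *)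

(* Defs.v *)
From HB Require Import structures.
From mathcomp Require Import all_boot all_order all_algebra.
From mathcomp Require Import classical_sets reals.
Set Implicit Arguments. Unset Strict Implicit. Unset Printing Implicit Defensive.
Import Order.TTheory GRing.Theory Num.Theory.
Local Open Scope ring_scope.
Local Open Scope classical_set_scope.

Section MDP.
Variables (R : realType) (S A : finType).

(* exact maximum of F over a finite type (0 if the type is empty) *)
Definition fmax (T : finType) (F : T -> R) : R :=
  match [pick x : T] with
  | Some x0 => \big[Num.max/F x0]_(x : T) F x
  | None => 0
  end.

Definition is_distr (P : S -> R) : Prop :=
  (forall s, 0 <= P s) /\ \sum_(s : S) P s = 1.

Definition is_kernel (P : S -> A -> S -> R) : Prop :=
  forall s a, is_distr (P s a).

Definition is_Vpi (gamma : R) (P : S -> A -> S -> R) (Rw : S -> A -> R)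
  (pi : S -> A) (V : S -> R) : Prop :=
  forall s, V s = Rw s (pi s) + gamma * \sum_(t : S) P s (pi s) t * V t.

Definition is_Vstar (gamma : R) (P : S -> A -> S -> R) (Rw : S -> A -> R)
  (V : S -> R) : Prop :=
  forall s, V s = fmax (fun a : A => Rw s a + gamma * \sum_(t : S) P s a t * V t).

Definition gapnorm (Vs Vp : S -> R) : R := fmax (fun s : S => Vs s - Vp s).

(* couplings of P (first marginal, real state) and Q (second, DT state) *)
Definition coupling (P Q : S -> R) (L : S -> S -> R) : Prop :=
  (forall i j, 0 <= L i j) /\
  (forall i, \sum_(j : S) L i j = P i) /\
  (forall j, \sum_(i : S) L i j = Q j).

(* Wasserstein-1 with cost d: min over couplings (written as inf; attained) *)
Definition W1 (P Q : S -> R) (d : S -> S -> R) : R :=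
  inf [set x | exists L, coupling P Q L /\
                 x = \sum_(i : S) \sum_(j : S) L i j * d i j].

Fixpoint dn (gamma : R) (P P' : S -> A -> S -> R) (Rw Rw' : S -> A -> R)
  (n : nat) : S -> S -> R :=
  match n with
  | 0 => fun _ _ => 0
  | n'.+1 => fun si sj =>
      fmax (fun a : A => `|Rw si a - Rw' sj a|
              + gamma * W1 (P si a) (P' sj a) (dn gamma P P' Rw Rw' n'))
  end.

(* DT bisimulation metric: supremum (= limit) of the nondecreasing d_n *)
Definition dbar (gamma : R) (P P' : S -> A -> S -> R) (Rw Rw' : S -> A -> R)
  (si sj : S) : R :=
  sup [set dn gamma P P' Rw Rw' n si sj | n in [set: nat]].

Definition Rmax (Rw Rw' : S -> A -> R) : R :=
  fmax (fun x : S * S * A => `|Rw x.1.1 x.2 - Rw' x.1.2 x.2|).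

Definition TV (P Q : S -> R) : R := 2^-1 * \sum_(i : S) `|P i - Q i|.

Definition dTV (gamma : R) (P P' : S -> A -> S -> R) (Rw Rw' : S -> A -> R)
  (s : S) : R :=
  fmax (fun a : A => `|Rw s a - Rw' s a|
          + gamma * Rmax Rw Rw' / (1 - gamma) * TV (P s a) (P' s a)).

End MDP.

(* Main.v *)
Require Import Defs.
From HB Require Import structures.
From mathcomp Require Import all_boot all_order all_algebra.
From mathcomp Require Import classical_sets reals.
From mathcomp Require Import ring lra.
Import Order.TTheory GRing.Theory Num.Theory.
Local Open Scope ring_scope.

Set Implicit Arguments. Unset Strict Implicit.


Lemma bern (R : realType) (h : R) n : 0 <= h -> 1 + n%:R * h <= (1 + h) ^+ n.
Proof.
move=> h0; elim: n => [|n IH]; first by rewrite mul0r addr0 expr0.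
rewrite exprS -natr1.
have hn : 0 <= n%:R * h by apply: mulr_ge0.
have : (1 + h) * (1 + n%:R * h) <= (1 + h) * (1 + h) ^+ n.
  by apply: ler_wpM2l => //; lra.
have : 0 <= h * (n%:R * h) by apply: mulr_ge0.
nra.
Qed.

Lemma geo_lim (R : realType) (g x y M : R) : 0 < g < 1 ->
  (forall n, x <= y + g ^+ n * M) -> x <= y.
Proof.
move=> /andP[g0 g1] H.
case: (leP M 0) => M0; first by have := H 0%N; rewrite expr0 mul1r; lra.
rewrite leNgt; apply/negP => yx.
set h := g^-1 - 1.
have h0 : 0 < h by rewrite /h subr_gt0 invf_gt1.
set e := x - y.
have e0 : 0 < e by rewrite /e subr_gt0.
have b0 : 0 <= M / (e * h) by apply: divr_ge0; [lra| apply: mulr_ge0; lra].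
have := archi_boundP b0; set n := Num.Def.archi_bound _ => Hn.
have Hb := @bern _ h n (ltW h0).
have gh : g * (1 + h) = 1 by rewrite /h addrC subrK mulfV // gt_eqF.
have gn : g ^+ n * (1 + h) ^+ n = 1 by rewrite -exprMn gh expr1n.
have Hn' : M < n%:R * h * e.
  by move: Hn; rewrite ltr_pdivrMr ?mulr_gt0 // mulrA mulrAC.
have gn0 : 0 < g ^+ n by apply: exprn_gt0.
have := H n.
have : g ^+ n * (1 + n%:R * h) <= 1.
  by rewrite -[X in _ <= X]gn; apply: ler_wpM2l ; [exact: ltW gn0 | exact: Hb].
have ee : e = x - y by []. clearbody h e n.
have N0 : 0 <= n%:R * h by apply: mulr_ge0; [apply: ler0n| apply: ltW].
move: Hn' N0 gn0; set G := g ^+ n; set N := n%:R * h => Hn' N0 gn0.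
have : 0 < G * (N * e - M) by apply: mulr_gt0; lra.
move=> H1 H2 H3; clearbody G N.
have H4 : 0 <= e * (1 - G * (1 + N)) by apply: mulr_ge0; lra.
nra.
Qed.

Lemma fmax_ge (R : realType) (T : finType) (F : T -> R) x : F x <= fmax F.
Proof.
rewrite /fmax; case: pickP => [x0 _|H]; last by move: (H x).
exact: le_bigmax.
Qed.

Lemma fmax_le (R : realType) (T : finType) (F : T -> R) (c : R) (x1 : T) :
  (forall x, F x <= c) -> fmax F <= c.
Proof.
move=> H; rewrite /fmax; case: pickP => [x0 _|H0]; last by move: (H0 x1).
by apply: bigmax_le => // i _.
Qed.

Lemma fmax_le0 (R : realType) (T : finType) (F : T -> R) (c : R) :
  0 <= c -> (forall x, F x <= c) -> fmax F <= c.
Proof.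
move=> c0 H; rewrite /fmax; case: pickP => [x0 _|H0] //.
by apply: bigmax_le => // i _.
Qed.

Lemma fmax_ge0 (R : realType) (T : finType) (F : T -> R) :
  (forall x, 0 <= F x) -> 0 <= fmax F.
Proof.
move=> H; rewrite /fmax; case: pickP => [x0 _|H0] //.
exact: le_trans (H x0) (le_bigmax _ _ _).
Qed.

Lemma W1_le (R : realType) (S : finType) (P Q : S -> R) d L :
  (forall i j, 0 <= d i j) -> coupling P Q L ->
  W1 P Q d <= \sum_i \sum_j L i j * d i j.
Proof.
move=> d0 cL; apply: ge_inf; last by exists L.
exists 0 => x [L' [[L0 _] ->]].
by apply: sumr_ge0 => i _; apply: sumr_ge0 => j _; apply: mulr_ge0.
Qed.

Lemma W1_ge (R : realType) (S : finType) (P Q : S -> R) d x L0 :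
  coupling P Q L0 ->
  (forall L, coupling P Q L -> x <= \sum_i \sum_j L i j * d i j) ->
  x <= W1 P Q d.
Proof.
move=> c0 H; apply: lb_le_inf; first by exists (\sum_i \sum_j L0 i j * d i j), L0.
by move=> y [L [cL ->]]; apply: H.
Qed.

Lemma prod_coupling (R : realType) (S : finType) (P Q : S -> R) :
  is_distr P -> is_distr Q -> coupling P Q (fun i j => P i * Q j).
Proof.
move=> [P0 P1] [Q0 Q1]; split; first by move=> i j; apply: mulr_ge0.
split=> [i|j]; first by rewrite -mulr_sumr Q1 mulr1.
by rewrite -mulr_suml P1 mul1r.
Qed.

Lemma distr_le (R : realType) (S : finType) (P : S -> R) (f : S -> R) c :
  is_distr P -> (forall s, f s <= c) -> \sum_s P s * f s <= c.
Proof.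
move=> [P0 P1] H; apply: le_trans (_ : \sum_s P s * c <= c).
  by apply: ler_sum => s _; apply: ler_wpM2l.
by rewrite -mulr_suml P1 mul1r.
Qed.

Lemma distr_ge (R : realType) (S : finType) (P : S -> R) (f : S -> R) c :
  is_distr P -> (forall s, c <= f s) -> c <= \sum_s P s * f s.
Proof.
move=> [P0 P1] H; apply: le_trans (_ : \sum_s P s * c <= _).
  by rewrite -mulr_suml P1 mul1r.
by apply: ler_sum => s _; apply: ler_wpM2l.
Qed.

Lemma distr_abs (R : realType) (S : finType) (P : S -> R) (f : S -> R) c :
  is_distr P -> (forall s, `|f s| <= c) -> `|\sum_s P s * f s| <= c.
Proof.
move=> dP H; rewrite ler_norml; apply/andP; split.
  apply: distr_ge => // s.
  by move: (H s); rewrite ler_norml => /andP[].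
apply: distr_le => // s; by move: (H s); rewrite ler_norml => /andP[].
Qed.

Lemma coupling_diff (R : realType) (S : finType) (P Q : S -> R) L (f g : S -> R) :
  coupling P Q L ->
  \sum_k P k * f k - \sum_l Q l * g l = \sum_k \sum_l L k l * (f k - g l).
Proof.
move=> [_ [HP HQ]].
under eq_bigr => k _ do rewrite -HP mulr_suml.
under [X in _ - X]eq_bigr => l _ do rewrite -HQ mulr_suml.
rewrite [X in _ - X]exchange_big -sumrB; apply: eq_bigr => k _.
rewrite -sumrB; apply: eq_bigr => l _; by rewrite mulrBr.
Qed.

Lemma sum_ge0_2 (R : realType) (S : finType) (F : S -> S -> R) :
  (forall i j, 0 <= F i j) -> 0 <= \sum_i \sum_j F i j.
Proof. by move=> H; apply: sumr_ge0 => i _; apply: sumr_ge0 => j _. Qed.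

Lemma coupling_mass (R : realType) (S : finType) (P Q : S -> R) L :
  is_distr P -> coupling P Q L -> \sum_i \sum_j L i j = 1.
Proof. by move=> [_ P1] [_ [HP _]]; under eq_bigr => i _ do rewrite HP. Qed.

Lemma dn_ge0 (R : realType) (S A : finType) (gamma : R) (P P' : S -> A -> S -> R)
  (Rw Rw' : S -> A -> R) : 0 <= gamma -> is_kernel P -> is_kernel P' ->
  forall n i j, 0 <= dn gamma P P' Rw Rw' n i j.
Proof.
move=> g0 kP kP'; elim=> [|n IH] i j //=.
apply: fmax_ge0 => a; apply: addr_ge0 => //; apply: mulr_ge0 => //.
apply: (@W1_ge _ _ _ _ _ _ (fun k l => P i a k * P' j a l)); first exact: prod_coupling.
move=> L [L0 _]; apply: sum_ge0_2 => k l; apply: mulr_ge0 => //.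
Qed.

Lemma Rmax_ge (R : realType) (S A : finType) (Rw Rw' : S -> A -> R) i j a :
  `|Rw i a - Rw' j a| <= Rmax Rw Rw'.
Proof. exact: (fmax_ge (fun x : S * S * A => `|Rw x.1.1 x.2 - Rw' x.1.2 x.2|) (i, j, a)). Qed.

Lemma Rmax_ge0 (R : realType) (S A : finType) (Rw Rw' : S -> A -> R) :
  0 <= Rmax Rw Rw'.
Proof. by apply: fmax_ge0 => x. Qed.

Lemma W1_prod_le (R : realType) (S : finType) (P Q : S -> R) d B :
  is_distr P -> is_distr Q -> (forall i j, 0 <= d i j) -> (forall i j, d i j <= B) ->
  W1 P Q d <= B.
Proof.
move=> dP dQ d0 dB.
apply: le_trans (W1_le d0 (prod_coupling dP dQ)) _.
under eq_bigr => i _ do under eq_bigr => j _ do rewrite -mulrA.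
under eq_bigr => i _ do rewrite -mulr_sumr.
by apply: distr_le => // i; apply: distr_le.
Qed.

Lemma dn_leB (R : realType) (S A : finType) (gamma : R) (P P' : S -> A -> S -> R)
  (Rw Rw' : S -> A -> R) : 0 <= gamma < 1 -> is_kernel P -> is_kernel P' ->
  forall n i j, dn gamma P P' Rw Rw' n i j <= Rmax Rw Rw' / (1 - gamma).
Proof.
move=> /andP[g0 g1] kP kP'.
have B0 : 0 <= Rmax Rw Rw' / (1 - gamma).
  by apply: divr_ge0; [exact: Rmax_ge0 | lra].
elim=> [|n IH] i j //=.
apply: fmax_le0 => // a.
have HW : W1 (P i a) (P' j a) (dn gamma P P' Rw Rw' n) <= Rmax Rw Rw' / (1 - gamma).
  by apply: W1_prod_le => //; apply: dn_ge0.
have E : Rmax Rw Rw' + gamma * (Rmax Rw Rw' / (1 - gamma)) = Rmax Rw Rw' / (1 - gamma).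
  by field; rewrite subr_eq0 gt_eqF.
rewrite -[X in _ <= X]E; apply: lerD; first exact: Rmax_ge.
exact: ler_wpM2l.
Qed.

Lemma dbar_ge (R : realType) (S A : finType) (gamma : R) (P P' : S -> A -> S -> R)
  (Rw Rw' : S -> A -> R) : 0 <= gamma < 1 -> is_kernel P -> is_kernel P' ->
  forall n i j, dn gamma P P' Rw Rw' n i j <= dbar gamma P P' Rw Rw' i j.
Proof.
move=> g kP kP' n i j; rewrite /dbar; apply: sup_upper_bound; last by exists n.
split; first by exists (dn gamma P P' Rw Rw' 0 i j); exists 0%N.
by exists (Rmax Rw Rw' / (1 - gamma)) => x [m _ <-]; apply: dn_leB.
Qed.

Lemma dbar_le (R : realType) (S A : finType) (gamma : R) (P P' : S -> A -> S -> R)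
  (Rw Rw' : S -> A -> R) i j c :
  (forall n, dn gamma P P' Rw Rw' n i j <= c) -> dbar gamma P P' Rw Rw' i j <= c.
Proof.
move=> H; rewrite /dbar; apply: ge_sup; first by exists (dn gamma P P' Rw Rw' 0 i j); exists 0%N.
by move=> x [m _ <-].
Qed.


Definition term (R : realType) (S A : finType) (gamma : R) (P P' : S -> A -> S -> R)
  (Rw Rw' : S -> A -> R) (Vr Vd : S -> R) i j a :=
  `|Rw i a - Rw' j a| + gamma * `|\sum_t P i a t * Vr t - \sum_t P' j a t * Vd t|.

Lemma D_le_term (R : realType) (S A : finType) (gamma : R) (P P' : S -> A -> S -> R)
  (Rw Rw' : S -> A -> R) (Vr Vd : S -> R) (a0 : A) i j c :
  0 <= gamma -> is_Vstar gamma P Rw Vr -> is_Vstar gamma P' Rw' Vd ->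
  (forall a, term gamma P P' Rw Rw' Vr Vd i j a <= c) -> `|Vr i - Vd j| <= c.
Proof.
move=> g0 HVr HVd H; rewrite (HVr i) (HVd j).
set f := fun a => _; set g := fun a => _.
have Hfg : forall a, `|f a - g a| <= c.
  move=> a; apply: le_trans (H a); rewrite /f /g /term.
  have -> : Rw i a + gamma * \sum_t P i a t * Vr t - (Rw' j a + gamma * \sum_t P' j a t * Vd t)
    = (Rw i a - Rw' j a) + gamma * (\sum_t P i a t * Vr t - \sum_t P' j a t * Vd t) by ring.
  by apply: le_trans (ler_normD _ _) _; rewrite normrM (ger0_norm g0).
have H1 : fmax f <= fmax g + c.
  apply: (fmax_le a0) => a; move: (Hfg a); rewrite ler_norml => /andP[_ h].
  by have := fmax_ge g a; lra.
have H2 : fmax g <= fmax f + c.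
  apply: (fmax_le a0) => a; move: (Hfg a); rewrite ler_norml => /andP[h _].
  by have := fmax_ge f a; lra.
by rewrite ler_norml; apply/andP; split; lra.
Qed.

Lemma term_step (R : realType) (S A : finType) (gamma : R) (P P' : S -> A -> S -> R)
  (Rw Rw' : S -> A -> R) (Vr Vd : S -> R) n e i j a :
  0 <= gamma -> is_kernel P -> is_kernel P' ->
  (forall k l, `|Vr k - Vd l| <= dn gamma P P' Rw Rw' n k l + e) ->
  term gamma P P' Rw Rw' Vr Vd i j a <= dn gamma P P' Rw Rw' n.+1 i j + gamma * e.
Proof.
move=> g0 kP kP' H.
have HW : `|\sum_t P i a t * Vr t - \sum_t P' j a t * Vd t| - e
          <= W1 (P i a) (P' j a) (dn gamma P P' Rw Rw' n).
  apply: (@W1_ge _ _ _ _ _ _ (fun k l => P i a k * P' j a l)); first exact: prod_coupling.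
  move=> L cL; rewrite (coupling_diff _ _ cL).
  have Hm := coupling_mass (kP i a) cL.
  have : `|\sum_k \sum_l L k l * (Vr k - Vd l)|
     <= \sum_k \sum_l L k l * dn gamma P P' Rw Rw' n k l + e * (\sum_k \sum_l L k l).
    apply: le_trans (ler_norm_sum _ _ _) _.
    rewrite mulr_sumr -big_split /=; apply: ler_sum => k _.
    apply: le_trans (ler_norm_sum _ _ _) _.
    rewrite mulr_sumr -big_split /=; apply: ler_sum => l _.
    case: cL => L0 _; rewrite normrM (ger0_norm (L0 k l)) [e * _]mulrC -mulrDr.
    by apply: ler_wpM2l; [exact: L0 | exact: H].
  by rewrite Hm mulr1; lra.
have Hd : `|Rw i a - Rw' j a| + gamma * W1 (P i a) (P' j a) (dn gamma P P' Rw Rw' n)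
   <= dn gamma P P' Rw Rw' n.+1 i j.
  by rewrite /=; apply: (fmax_ge (fun a => _)).
rewrite /term; have : gamma * (`|\sum_t P i a t * Vr t - \sum_t P' j a t * Vd t| - e)
   <= gamma * W1 (P i a) (P' j a) (dn gamma P P' Rw Rw' n) by apply: ler_wpM2l.
lra.
Qed.

Lemma D_le_dbar (R : realType) (S A : finType) (gamma : R) (P P' : S -> A -> S -> R)
  (Rw Rw' : S -> A -> R) (Vr Vd : S -> R) (a0 : A) :
  0 < gamma < 1 -> is_kernel P -> is_kernel P' ->
  is_Vstar gamma P Rw Vr -> is_Vstar gamma P' Rw' Vd ->
  (forall k l, `|Vr k - Vd l| <= dbar gamma P P' Rw Rw' k l) /\
  (forall i j a, term gamma P P' Rw Rw' Vr Vd i j a <= dbar gamma P P' Rw Rw' i j).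
Proof.
move=> g kP kP' HVr HVd; have /andP[g0 g1] := g.
have g0' : 0 <= gamma by apply: ltW.
have g' : 0 <= gamma < 1 by rewrite g0' g1.
set M := fmax (fun x : S * S => `|Vr x.1 - Vd x.2|).
have K : forall n k l, `|Vr k - Vd l| <= dn gamma P P' Rw Rw' n k l + gamma ^+ n * M.
  elim=> [|n IH] k l.
    by rewrite /= expr0 mul1r add0r; exact: (fmax_ge (fun x : S * S => _) (k, l)).
  apply: (D_le_term a0 g0' HVr HVd) => a.
  by rewrite exprS -mulrA; apply: term_step.
split=> [k l|i j a].
  apply: (@geo_lim _ gamma _ _ M) => // n.
  apply: le_trans (K n k l) _; rewrite lerD2r; exact: dbar_ge.
apply: (@geo_lim _ gamma _ _ (gamma * M)) => // n.
apply: le_trans (term_step i j a g0' kP kP' (K n)) _.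
rewrite mulrCA lerD2r; exact: dbar_ge.
Qed.

Lemma Vpi_le_Vstar (R : realType) (S A : finType) (gamma : R) (P : S -> A -> S -> R)
  (Rw : S -> A -> R) (pi : S -> A) (V W : S -> R) :
  0 <= gamma < 1 -> is_kernel P -> is_Vstar gamma P Rw V -> is_Vpi gamma P Rw pi W ->
  forall s, W s <= V s.
Proof.
move=> /andP[g0 g1] kP HV HW s.
set h := fmax (fun s => W s - V s).
have Hs : forall s, W s - V s <= gamma * h.
  move=> t; rewrite (HW t).
  have := fmax_ge (fun a => Rw t a + gamma * \sum_u P t a u * V u) (pi t).
  rewrite -(HV t) => Ht.
  have : \sum_u P t (pi t) u * W u - \sum_u P t (pi t) u * V u <= h.
    rewrite -sumrB; under eq_bigr => u _ do rewrite -mulrBr.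
    by apply: distr_le => // u; exact: (fmax_ge (fun s => W s - V s)).
  move=> Hh; have := ler_wpM2l g0 Hh; rewrite mulrBr; lra.
have : h <= gamma * h by apply: (fmax_le s).
have := Hs s; nra.
Qed.


Lemma sum_indic (R : realType) (S : finType) (k : S) (f : S -> R) :
  \sum_l (k == l)%:R * f l = f k.
Proof.
rewrite (bigD1 k) //= eqxx mul1r big1 ?addr0 // => l /negbTE.
by rewrite eq_sym => ->; rewrite mul0r.
Qed.

Lemma W1_maxc (R : realType) (S : finType) (P Q : S -> R) d c B :
  is_distr P -> is_distr Q -> (forall i j, 0 <= d i j) -> (forall i j, d i j <= B) ->
  (forall k, d k k <= c) -> 0 <= c -> W1 P Q d <= c + B * TV P Q.
Proof.
move=> [P0 P1] [Q0 Q1] d0 dB dc c0.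
set m := fun k => Num.min (P k) (Q k).
set p := fun k => P k - m k.
set q := fun k => Q k - m k.
have p0 : forall k, 0 <= p k by move=> k; rewrite /p /m subr_ge0 ge_min lexx.
have q0 : forall k, 0 <= q k by move=> k; rewrite /q /m subr_ge0 ge_min lexx orbT.
have m0 : forall k, 0 <= m k by move=> k; rewrite /m le_min P0 Q0.
have pq : forall k, p k + q k = `|P k - Q k|.
  move=> k; rewrite /p /q /m; case: (leP (P k) (Q k)) => h.
    by rewrite ler0_norm ?subr_le0 //; ring.
  by rewrite gtr0_norm ?subr_gt0 //; ring.
have sp : \sum_k p k = TV P Q.
  have e1 : \sum_k p k + \sum_k q k = \sum_k `|P k - Q k|.
    by rewrite -big_split; apply: eq_bigr => k _; apply: pq.
  have e2 : \sum_k p k - \sum_k q k = 0.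
    rewrite -sumrB (eq_bigr (fun k => P k - Q k)); last by move=> k _; rewrite /p /q; ring.
    by rewrite sumrB P1 Q1 subrr.
  rewrite /TV -e1; lra.
have sq : \sum_k q k = TV P Q.
  have e1 : \sum_k p k + \sum_k q k = \sum_k `|P k - Q k|.
    by rewrite -big_split; apply: eq_bigr => k _; apply: pq.
  have e2 : \sum_k p k - \sum_k q k = 0.
    rewrite -sumrB (eq_bigr (fun k => P k - Q k)); last by move=> k _; rewrite /p /q; ring.
    by rewrite sumrB P1 Q1 subrr.
  rewrite /TV -e1; lra.
set T := TV P Q in sp sq *.
have T0 : 0 <= T by rewrite -sp; apply: sumr_ge0.
have pT : forall k, p k * T / T = p k.
  move=> k; have [Tz|Tn] := eqVneq T 0.
    rewrite Tz mulr0 mul0r; symmetry.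
    by apply: (@psumr_eq0P _ _ predT _ (fun i _ => p0 i)) => //; rewrite sp.
  by rewrite mulfK.
have qT : forall k, q k * T / T = q k.
  move=> k; have [Tz|Tn] := eqVneq T 0.
    rewrite Tz mulr0 mul0r; symmetry.
    by apply: (@psumr_eq0P _ _ predT _ (fun i _ => q0 i)) => //; rewrite sq.
  by rewrite mulfK.
set L := fun k l => (k == l)%:R * m k + p k * q l / T.
have cL : coupling P Q L.
  split; first by move=> k l; apply: addr_ge0; [apply: mulr_ge0 => //; apply: ler0n|
    apply: divr_ge0 => //; apply: mulr_ge0].
  split=> [k|l].
    rewrite /L big_split /= sum_indic.
    under eq_bigr => l _ do rewrite mulrAC.
    by rewrite -mulr_sumr sq mulrAC pT /p; ring.
  rewrite /L big_split /=.
  under eq_bigr => k _ do rewrite eq_sym.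
  rewrite sum_indic.
  under eq_bigr => k _ do rewrite mulrAC mulrC.
  by rewrite -mulr_sumr -mulr_suml sp mulrA qT /q; ring.
apply: le_trans (W1_le d0 cL) _.
rewrite /L.
under eq_bigr => k _ do under eq_bigr => l _ do rewrite mulrDl.
under eq_bigr => k _ do rewrite big_split /=.
rewrite big_split /=; apply: lerD.
  under eq_bigr => k _ do under eq_bigr => l _ do rewrite -mulrA.
  under eq_bigr => k _ do rewrite (sum_indic k (fun l => m k * d k l)).
  apply: le_trans (_ : \sum_k P k * c <= c); last by rewrite -mulr_suml P1 mul1r.
  apply: ler_sum => k _; apply: le_trans (_ : m k * c <= _).
    by apply: ler_wpM2l.
  by apply: ler_wpM2r => //; rewrite /m ge_min lexx.
apply: le_trans (_ : \sum_k \sum_l p k * q l / T * B <= _).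
  apply: ler_sum => k _; apply: ler_sum => l _; apply: ler_wpM2l => //.
  by apply: divr_ge0 => //; apply: mulr_ge0.
under eq_bigr => k _ do under eq_bigr => l _ do rewrite -mulrA -mulrA.
under eq_bigr => k _ do rewrite -mulr_sumr.
rewrite -mulr_suml sq -mulr_suml sp.
have [Tz|Tn] := eqVneq T 0; first by rewrite Tz !mul0r mulr0.
by rewrite [X in X <= _](_ : _ = B * T) //; field.
Qed.


Lemma dbar_diag_le (R : realType) (S A : finType) (gamma : R) (P P' : S -> A -> S -> R)
  (Rw Rw' : S -> A -> R) : 0 <= gamma < 1 -> is_kernel P -> is_kernel P' ->
  forall k, dbar gamma P P' Rw Rw' k k
     <= fmax (fun s : S => dTV gamma P P' Rw Rw' s) / (1 - gamma).
Proof.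
move=> g kP kP'; have /andP[g0 g1] := g.
set Tm := fmax _.
have TV0 : forall s a, 0 <= TV (P s a) (P' s a).
  by move=> s a; apply: mulr_ge0; [rewrite invr_ge0 ler0n | apply: sumr_ge0].
have Rm0 := Rmax_ge0 Rw Rw'.
have T0 : 0 <= Tm.
  apply: fmax_ge0 => s; apply: fmax_ge0 => a; apply: addr_ge0 => //.
  apply: mulr_ge0 => //; apply: divr_ge0; [apply: mulr_ge0 => // | lra].
have c0 : 0 <= Tm / (1 - gamma) by apply: divr_ge0 => //; lra.
suff H : forall n k, dn gamma P P' Rw Rw' n k k <= Tm / (1 - gamma).
  by move=> k; apply: dbar_le => n; apply: H.
elim=> [|n IH] s //=.
apply: fmax_le0 => // a.
have d0 : forall i j, 0 <= dn gamma P P' Rw Rw' n i j by move=> i j; apply: dn_ge0.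
have dB : forall i j, dn gamma P P' Rw Rw' n i j <= Rmax Rw Rw' / (1 - gamma).
  by move=> i j; apply: dn_leB.
have HW := W1_maxc (kP s a) (kP' s a) d0 dB IH c0.
have Hd : `|Rw s a - Rw' s a| + gamma * Rmax Rw Rw' / (1 - gamma) * TV (P s a) (P' s a)
   <= Tm.
  apply: le_trans (fmax_ge (fun s => dTV gamma P P' Rw Rw' s) s).
  exact: (fmax_ge (fun a => _) a).
have E1 : gamma * (Tm / (1 - gamma) + Rmax Rw Rw' / (1 - gamma) * TV (P s a) (P' s a))
   = gamma * Rmax Rw Rw' / (1 - gamma) * TV (P s a) (P' s a) + gamma * (Tm / (1 - gamma)).
  by ring.
have E2 : Tm + gamma * (Tm / (1 - gamma)) = Tm / (1 - gamma).
  by field; rewrite subr_eq0 gt_eqF.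
have := ler_wpM2l g0 HW; rewrite E1 => h.
rewrite -E2; lra.
Qed.

Unset Implicit Arguments. Set Strict Implicit.


Lemma fmax_empty (R : realType) (T : finType) (F : T -> R) :
  @predT T =1 xpred0 -> fmax F = 0.
Proof. by move=> H; rewrite /fmax; case: pickP => [x _|//]; have := H x. Qed.

Lemma abs_split (R : realType) (x : R) : - `|x| <= x <= `|x|.
Proof. by rewrite -ler_norml. Qed.
Arguments abs_split {R}.

Theorem theorem1 (R : realType) (S A : finType) (gamma : R)
  (P P' : S -> A -> S -> R) (Rw Rw' : S -> A -> R) (pi : S -> A)
  (Vr_star Vr_pi Vd_star Vd_pi : S -> R) :
  0 < gamma < 1 ->
  is_kernel P -> is_kernel P' ->
  is_Vstar gamma P Rw Vr_star -> is_Vpi gamma P Rw pi Vr_pi ->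
  is_Vstar gamma P' Rw' Vd_star -> is_Vpi gamma P' Rw' pi Vd_pi ->
  gapnorm Vr_star Vr_pi
    <= 2 / (1 - gamma) * fmax (fun s : S => dbar gamma P P' Rw Rw' s s)
       + (1 + gamma) / (1 - gamma) * gapnorm Vd_star Vd_pi
  /\
  2 / (1 - gamma) * fmax (fun s : S => dbar gamma P P' Rw Rw' s s)
       + (1 + gamma) / (1 - gamma) * gapnorm Vd_star Vd_pi
    <= 2 / (1 - gamma) ^+ 2 * fmax (fun s : S => dTV gamma P P' Rw Rw' s)
       + (1 + gamma) / (1 - gamma) * gapnorm Vd_star Vd_pi.
Proof.
move=> g kP kP' HVr HVpr HVd HVpd; have /andP[g0 g1] := g.
have g0' : 0 <= gamma by apply: ltW.
have g' : 0 <= gamma < 1 by rewrite g0' g1.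
case: (pickP (@predT S)) => [s0 _|Hn]; last first.
  rewrite /gapnorm !(@fmax_empty _ _ _ Hn) !mulr0 addr0.
  by split.
have a0 := pi s0.
have [Dv Dt] := D_le_dbar a0 g kP kP' HVr HVd.
set Dm := fmax (fun s : S => dbar gamma P P' Rw Rw' s s).
set G := gapnorm Vd_star Vd_pi.
set Tm := fmax (fun s : S => dTV gamma P P' Rw Rw' s).
have Hg : forall s, 0 <= Vd_star s - Vd_pi s.
  by move=> s; rewrite subr_ge0; apply: (Vpi_le_Vstar g' kP' HVd HVpd).
have HgG : forall s, Vd_star s - Vd_pi s <= G.
  by move=> s; apply: (fmax_ge (fun s => Vd_star s - Vd_pi s)).
have G0 : 0 <= G := le_trans (Hg s0) (HgG s0).
have HD : forall s, `|Vr_star s - Vd_star s| <= Dm.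
  by move=> s; apply: le_trans (Dv s s) (fmax_ge (fun s => _) s).
have Ht : forall s a, term gamma P P' Rw Rw' Vr_star Vd_star s s a <= Dm.
  by move=> s a; apply: le_trans (Dt s s a) (fmax_ge (fun s => _) s).
set Dl := fmax (fun s => `|Vr_pi s - Vd_pi s|).
have HDl : forall s, `|Vr_pi s - Vd_pi s| <= Dl.
  by move=> s; apply: (fmax_ge (fun s => `|Vr_pi s - Vd_pi s|)).
have HDe : forall s, `|Vr_pi s - Vd_pi s| <= Dm + gamma * (Dl + Dm + G).
  move=> s; set a := pi s.
  set sP := fun f : S -> R => \sum_t P s a t * f t.
  set sP' := fun f : S -> R => \sum_t P' s a t * f t.
  have lin : forall Q (f h : S -> R), \sum_t Q t * (f t - h t) = \sum_t Q t * f t - \sum_t Q t * h t.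
    by move=> Q f h; rewrite -sumrB; apply: eq_bigr => t _; rewrite mulrBr.
  have b1 : `|sP (fun t => Vr_pi t - Vd_pi t)| <= Dl.
    by apply: distr_abs => //; apply: kP.
  have b2 : `|sP (fun t => Vr_star t - Vd_star t)| <= Dm.
    by apply: distr_abs => //; apply: kP.
  have b3 : 0 <= sP (fun t => Vd_star t - Vd_pi t) <= G.
    by apply/andP; split; [apply: distr_ge | apply: distr_le] => //; apply: kP.
  have b4 : 0 <= sP' (fun t => Vd_star t - Vd_pi t) <= G.
    by apply/andP; split; [apply: distr_ge | apply: distr_le] => //; apply: kP'.
  have b5 := Ht s a; rewrite /term in b5.
  move: b1 b2 b3 b4 b5; rewrite /sP /sP' !lin => b1 b2 b3 b4 b5.
  rewrite (HVpr s) (HVpd s) -/a.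
  move: b1 b2 b3 b4 b5.
  set X1 := \sum_t P s a t * Vr_pi t.
  set X2 := \sum_t P s a t * Vd_pi t.
  set X3 := \sum_t P s a t * Vr_star t.
  set X4 := \sum_t P s a t * Vd_star t.
  set Y2 := \sum_t P' s a t * Vd_pi t.
  set Y4 := \sum_t P' s a t * Vd_star t.
  set r := Rw s a - Rw' s a.
  set u := X1 - Y2.
  move=> b1 b2 b3 b4 b5.
  have Hu : `|u| <= `|X3 - Y4| + (Dl + Dm + G).
    rewrite ler_norml; have := abs_split (X3 - Y4); have := abs_split (X1 - X2);
    have := abs_split (X3 - X4); move: b1 b2 b3 b4.
    rewrite /u; lra.
  have E : Rw s a + gamma * X1 - (Rw' s a + gamma * Y2) = r + gamma * u by rewrite /r /u; ring.
  rewrite E; apply: le_trans (ler_normD _ _) _.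
  rewrite normrM (ger0_norm g0').
  have := ler_wpM2l g0' Hu; rewrite mulrDr; rewrite -/r in b5; lra.
have HDl2 : Dl <= Dm + gamma * (Dl + Dm + G) by apply: (fmax_le s0).
have Hgap : gapnorm Vr_star Vr_pi <= Dm + G + Dl.
  apply: (fmax_le s0) => s.
  have := HD s; have := HDl s; have := HgG s.
  have := abs_split (Vr_star s - Vd_star s); have := abs_split (Vr_pi s - Vd_pi s).
  lra.
have HDT : Dm <= Tm / (1 - gamma).
  by apply: (fmax_le s0) => s; apply: dbar_diag_le.
set u := (1 - gamma)^-1.
have u0 : 0 < u by rewrite /u invr_gt0 subr_gt0.
have hu : u * (1 - gamma) = 1 by rewrite /u mulVf // subr_eq0 gt_eqF.
split.
  have hDl : Dl <= u * ((1 + gamma) * Dm + gamma * G).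
    have e : Dl = u * ((1 - gamma) * Dl) by rewrite mulrA hu mul1r.
    rewrite [X in X <= _]e; apply: ler_wpM2l; [exact: ltW | lra].
  have e1 : Dm = Dm * (u * (1 - gamma)) by rewrite hu mulr1.
  have e2 : G * u - G = G * u * gamma.
    by rewrite -[X in _ - X](mulr1 G) -[X in G * u - G * X]hu; ring.
  have e3 : 0 <= G * u * gamma by apply: mulr_ge0 => //; apply: mulr_ge0 => //; exact: ltW.
  rewrite /Dm /G /u; move: hDl e1 e2 e3 Hgap; rewrite -/Dm -/G -/u.
  nra.
apply: lerD => //.
have e : 2 / (1 - gamma) ^+ 2 * Tm = 2 / (1 - gamma) * (Tm / (1 - gamma)).
  by rewrite expr2 invfM; ring.
rewrite e; apply: ler_wpM2l => //.
by apply: divr_ge0 => //; lra.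
Qed.
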